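(* Consider a downlink system with $K$ users, $M$ transmit antennas, $N$ receive antennas per user and $d$ data streams per user. Let $\mathbf{H}_k\in\mathbb{C}^{N\times M}$ be channel matrices, $\sigma_k^2>0$ noise powers and $P_{\max}>0$, and let $\kappa \triangleq \max_k \sigma_{\max}(\mathbf{H}_k^H\mathbf{H}_k)>0$. For any receive matrices $\mathbf{U}=\{\mathbf{U}_k\}_{k=1}^K$, $\mathbf{U}_k\in\mathbb{C}^{N\times d}$, and any precoders $\mathbf{V}=\{\mathbf{V}_k\}_{k=1}^K$, $\mathbf{V}_k\in\mathbb{C}^{M\times d}$, satisfying $\sum_{k=1}^K\operatorname{Tr}(\mathbf{V}_k\mathbf{V}_k^H)\le P_{\max}$, the matrix $$\mathbf{E}_k=(\mathbf{I}-\mathbf{U}_k^H\mathbf{H}_k\mathbf{V}_k)(\mathbf{I}-\mathbf{U}_k^H\mathbf{H}_k\mathbf{V}_k)^H+\mathbf{U}_k^H\Big(\sum_{j\neq k}\mathbf{H}_k\mathbf{V}_j\mathbf{V}_j^H\mathbf{H}_k^H+\sigma_k^2\mathbf{I}\Big)\mathbf{U}_k$$ satisfies $$\lambda_{\min}(\mathbf{E}_k)\ge \frac{\sigma_k^2}{P_{\max}\kappa+\sigma_k^2}\quad\text{for all } k.$$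
   Context: $\sigma_{\max}(\cdot)$ denotes the largest singular value and $\lambda_{\min}(\cdot)$ the smallest eigenvalue of a Hermitian matrix; $\mathbf{I}$ is the $d\times d$ identity (or $N\times N$ identity inside the bracket). *)

(* Defs.v *)
From mathcomp Require Import all_boot all_order all_algebra.
From mathcomp Require Import classical_sets reals complex.
Set Implicit Arguments. Unset Strict Implicit. Unset Printing Implicit Defensive.
Import Order.TTheory GRing.Theory Num.Theory.
Local Open Scope ring_scope.
Local Open Scope complex_scope.
Local Open Scope classical_set_scope.

Definition ctrmx (R : realType) (m n : nat) (A : 'M[R[i]]_(m, n)) : 'M[R[i]]_(n, m) :=
  (map_mx Num.conj A)^T.

(* Real eigenvalues of a square complex matrix.  For a Hermitian matrix these are
   all of its eigenvalues. *)
Definition real_eigs (R : realType) (n : nat) (A : 'M[R[i]]_n) : set R :=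
  [set x : R | eigenvalue A x%:C].

Definition lambda_min (R : realType) (n : nat) (A : 'M[R[i]]_n) : R :=
  inf (real_eigs A).
Definition lambda_max (R : realType) (n : nat) (A : 'M[R[i]]_n) : R :=
  sup (real_eigs A).

Definition sigma_max (R : realType) (m n : nat) (A : 'M[R[i]]_(m, n)) : R :=
  Num.sqrt (lambda_max (ctrmx A *m A)).

Definition kappa (R : realType) (K N M : nat) (H : 'I_K -> 'M[R[i]]_(N, M)) : R :=
  \big[Num.max/0]_(k < K) sigma_max (ctrmx (H k) *m H k).

Definition Emat (R : realType) (K M N d : nat) (H : 'I_K -> 'M[R[i]]_(N, M))
  (sigma2 : 'I_K -> R) (U : 'I_K -> 'M[R[i]]_(N, d)) (V : 'I_K -> 'M[R[i]]_(M, d))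
  (k : 'I_K) : 'M[R[i]]_d :=
  let T := 1%:M - ctrmx (U k) *m H k *m V k in
  T *m ctrmx T
  + ctrmx (U k) *m
      (\sum_(j < K | j != k) H k *m V j *m ctrmx (V j) *m ctrmx (H k)
       + (sigma2 k)%:C%:M) *m U k.

(* Main.v *)
Require Import Defs.
From mathcomp Require Import all_boot all_order all_algebra.
From mathcomp Require Import classical_sets reals complex.
From mathcomp Require Import sesquilinear spectral ring lra.
Import Order.TTheory GRing.Theory Num.Theory.
Local Open Scope ring_scope.
Local Open Scope complex_scope.
Set Implicit Arguments. Unset Strict Implicit. Unset Printing Implicit Defensive.

Section S.
Variable R : realType.
Local Notation C := (R[i]).

Lemma ctrmxK m n (A : 'M[C]_(m, n)) : ctrmx (ctrmx A) = A.
Proof. by apply/matrixP=> i j; rewrite /ctrmx !mxE conjCK. Qed.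

Lemma ctrmx_mul m n p (A : 'M[C]_(m, n)) (B : 'M[C]_(n, p)) :
  ctrmx (A *m B) = ctrmx B *m ctrmx A.
Proof. by rewrite /ctrmx map_mxM trmx_mul. Qed.

Lemma ctrmxD m n (A B : 'M[C]_(m, n)) : ctrmx (A + B) = ctrmx A + ctrmx B.
Proof. by rewrite /ctrmx map_mxD linearD. Qed.

Lemma ctrmxN m n (A : 'M[C]_(m, n)) : ctrmx (- A) = - ctrmx A.
Proof. by rewrite /ctrmx map_mxN linearN. Qed.

Lemma ctrmxB m n (A B : 'M[C]_(m, n)) : ctrmx (A - B) = ctrmx A - ctrmx B.
Proof. by rewrite ctrmxD ctrmxN. Qed.

Lemma ctrmx_scalar n (x : R) : ctrmx (x%:C%:M : 'M[C]_n) = x%:C%:M.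
Proof.
have cr : Num.conj (x%:C) = x%:C := conjc_real x.
by apply/matrixP=> i j; rewrite /ctrmx !mxE eq_sym rmorphMn /= cr.
Qed.

Lemma ctrmx1 n : ctrmx (1%:M : 'M[C]_n) = 1%:M.
Proof.
by apply/matrixP=> i j; rewrite /ctrmx !mxE eq_sym rmorphMn /= conjC1.
Qed.

Lemma ctrmx_sum n m (I : finType) (P : pred I) (F : I -> 'M[C]_(n, m)) :
  ctrmx (\sum_(i | P i) F i) = \sum_(i | P i) ctrmx (F i).
Proof.
apply: (big_morph _ (@ctrmxD n m)).
by apply/matrixP=> i j; rewrite /ctrmx !mxE conjC0.
Qed.

Definition dt n (u v : 'rV[C]_n) := @dotmx C n u v.

Lemma dtE n (u v : 'rV[C]_n) : dt u v = (u *m ctrmx v) 0 0.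
Proof. by rewrite /dt dotmxE /ctrmx map_trmx. Qed.

Lemma dt_mulmx n m (u : 'rV[C]_n) (A : 'M[C]_(n, m)) v :
  dt (u *m A) v = dt u (v *m ctrmx A).
Proof. by rewrite !dtE ctrmx_mul ctrmxK mulmxA. Qed.

Lemma dt_ge0 n (u : 'rV[C]_n) : 0 <= dt u u.
Proof. exact: dnorm_ge0. Qed.

Lemma dt_gt0 n (u : 'rV[C]_n) : u != 0 -> 0 < dt u u.
Proof. by move=> h; rewrite /dt dnorm_gt0. Qed.


Lemma le_bigmax_seq (I : eqType) (r : seq I) (F : I -> R) k :
  k \in r -> F k <= \big[Num.max/0]_(j <- r) F j.
Proof.
elim: r => [//|a r IH]; rewrite inE big_cons => /orP[/eqP->|/IH h].
  by rewrite le_max lexx.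
by rewrite le_max h orbT.
Qed.

Lemma le_bigmax_ord K (F : 'I_K -> R) k : F k <= \big[Num.max/0]_(j < K) F j.
Proof. by apply: le_bigmax_seq; rewrite mem_index_enum. Qed.

Lemma tstarE m n (M : 'M[C]_(m, n)) : (M ^t* )%sesqui = ctrmx M.
Proof. by apply/matrixP=> i j; rewrite /ctrmx !mxE. Qed.

Lemma herm_of n (A : 'M[C]_n) : ctrmx A = A -> A \is hermsymmx.
Proof. by move=> h; apply/is_hermitianmxP; rewrite expr0 scale1r tstarE h. Qed.

Lemma rowv_neq0 n (y : 'rV[C]_n) : y != 0 -> exists j, y 0 j != 0.
Proof.
move=> yn0; apply/existsP; apply: contraR yn0; rewrite negb_exists => /forallP h.
by apply/eqP/rowP => j; rewrite mxE; apply/eqP; move: (h j); rewrite negbK.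
Qed.

Section Spec.
Variables (n : nat) (A : 'M[C]_n).
Hypothesis hA : ctrmx A = A.
Let P := spectralmx A.
Let D := spectral_diag A.

Fact PU : P *m ctrmx P = 1%:M.
Proof. by have /unitarymxP := spectral_unitarymx A; rewrite tstarE. Qed.
Fact PU' : ctrmx P *m P = 1%:M.
Proof. exact: mulmx1C PU. Qed.
Fact Aeq : A = ctrmx P *m diag_mx D *m P.
Proof.
have /orthomx_spectralP h := hermitian_normalmx (herm_of hA).
have hu := spectral_unitarymx A.
rewrite (invmx_unitary hu) tstarE in h.
exact: h.
Qed.
Fact Dreal j : D 0 j = (complex.Re (D 0 j))%:C.
Proof.
have /mxOverP h := hermitian_spectral_diag_real (herm_of hA).
by rewrite RRe_real // h.
Qed.


Fact eig_diag e : real_eigs A e -> exists j, e%:C = D 0 j.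
Proof.
rewrite /real_eigs /= => /eigenvalueP [v hv vn0].
set y := v *m ctrmx P.
have yn0 : y != 0.
  apply: contraNneq vn0 => y0.
  by rewrite -[v]mulmx1 -PU' mulmxA -/y y0 mul0mx.
have hy : y *m diag_mx D = e%:C *: y.
  have h1 : v *m A = v *m ctrmx P *m diag_mx D *m P by rewrite {1}Aeq !mulmxA.
  by rewrite -[LHS]mulmx1 -PU !mulmxA -h1 hv -scalemxAl.
clearbody y; have [j yj] := rowv_neq0 yn0.
exists j; move/matrixP: hy => /(_ 0 j); rewrite mul_mx_diag !mxE => h.
by apply: (mulfI yj); rewrite mulrC -h.
Qed.

Fact diag_eig j : real_eigs A (complex.Re (D 0 j)).
Proof.
rewrite /real_eigs /= -Dreal; apply/eigenvalueP; exists (row j P).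
  rewrite {1}Aeq !mulmxA -row_mul PU row1 -rowE row_diag_mx.
  by rewrite -scalemxAl -rowE.
apply/eqP => h.
have : row j (P *m ctrmx P) = 0 by rewrite row_mul h mul0mx.
rewrite PU row1 => /matrixP /(_ 0 j); rewrite !mxE !eqxx /= => /eqP.
by rewrite oner_eq0.
Qed.

Fact eigs_ub : has_ubound (real_eigs A).
Proof.
exists (\big[Num.max/0]_(j < n) complex.Re (D 0 j)) => e /eig_diag [j hj].
have -> : e = complex.Re (D 0 j) by rewrite -hj.
exact: le_bigmax_ord.
Qed.

Fact Dle j : D 0 j <= (lambda_max A)%:C.
Proof. by rewrite Dreal lecR; apply: (ub_le_sup eigs_ub); apply: diag_eig. Qed.

Lemma rayleigh x : dt (x *m A) x <= (lambda_max A)%:C * dt x x.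
Proof.
set y := x *m ctrmx P.
have e1 : dt (x *m A) x = dt (y *m diag_mx D) y.
  by rewrite {1}Aeq !mulmxA -/y dt_mulmx.
have e2 : dt x x = dt y y.
  by rewrite /y dt_mulmx ctrmxK -[x *m _ *m _]mulmxA PU' mulmx1.
clearbody y; rewrite e1 e2 !dtE mul_mx_diag !mxE mulr_sumr; apply: ler_sum => j _.
rewrite /ctrmx !mxE mulrAC [X in _ <= X]mulrC.
by apply: ler_wpM2l; [apply: mul_conjC_ge0 | apply: Dle].
Qed.
End Spec.
Lemma ge0_C (z : C) : 0 <= z -> z = (complex.Re z)%:C /\ 0 <= complex.Re z.
Proof.
move=> hz; have zr : z \is Num.real by apply: ger0_real.
split; first by rewrite RRe_real.
by rewrite -ler0c RRe_real.
Qed.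

Lemma CS n (u v : 'rV[C]_n) : `|dt u v| ^+ 2 <= dt u u * dt v v.
Proof. exact: (CauchySchwarz (@dotmx C n) u v).1. Qed.

Lemma kap_bound N M (Hm : 'M[C]_(N, M)) (w : 'rV[C]_N) :
  dt (w *m Hm) (w *m Hm) <= (sigma_max (ctrmx Hm *m Hm))%:C * dt w w.
Proof.
set G := ctrmx Hm *m Hm.
have hG : ctrmx G = G by rewrite /G ctrmx_mul ctrmxK.
have hG2 : ctrmx (ctrmx G *m G) = ctrmx G *m G by rewrite ctrmx_mul ctrmxK.
set mu := lambda_max (ctrmx G *m G).
have -> : sigma_max G = Num.sqrt mu by [].
set p := dt w w.
set q := dt (w *m Hm) (w *m Hm).
set r := dt (w *m Hm *m ctrmx Hm) (w *m Hm *m ctrmx Hm).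
set s := dt (w *m Hm *m G) (w *m Hm *m G).
have cs1 : q ^+ 2 <= r * p.
  have := CS (w *m Hm *m ctrmx Hm) w.
  rewrite dt_mulmx ctrmxK -/q -/r -/p ger0_norm //; exact: dt_ge0.
have cs2 : r ^+ 2 <= s * q.
  have := CS (w *m Hm *m G) (w *m Hm).
  rewrite /G mulmxA dt_mulmx -/r -/q ger0_norm; last exact: dt_ge0.
  by rewrite /s /G mulmxA.
have ray : s <= mu%:C * q.
  have := rayleigh hG2 (w *m Hm).
  by rewrite (mulmxA (w *m Hm)) dt_mulmx /s /q /mu hG.
have [eq nq] := ge0_C (dt_ge0 (w *m Hm)).
have [ep np] := ge0_C (dt_ge0 w).
have [er nr] := ge0_C (dt_ge0 (w *m Hm *m ctrmx Hm)).
have [es ns] := ge0_C (dt_ge0 (w *m Hm *m G)).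
rewrite -/q -/p -/r -/s in eq ep er es.
move: cs1 cs2 ray; rewrite eq ep er es -!rmorphXn -!rmorphM !lecR.
rewrite -/q -/p -/r -/s in nq np nr ns; clear eq ep er es.
move: (complex.Re q) (complex.Re p) (complex.Re r) (complex.Re s) nq np nr ns.
move=> q' p' r' s' nq np nr ns cs1 cs2 ray.
have [q0|qpos] := eqVneq q' 0.
  by rewrite q0 mulr_ge0 // sqrtr_ge0.
have qp : 0 < q' by rewrite lt_def qpos nq.
have mu0 : 0 <= mu.
  have : 0 <= mu * q' by apply: le_trans ray.
  by rewrite pmulr_lge0.
have k2 := sqr_sqrtr mu0.
have k0 := sqrtr_ge0 mu.
move: (Num.sqrt mu) k2 k0 => k k2 k0.
have h1 : r' ^+ 2 <= (k * q') ^+ 2.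
  rewrite exprMn k2; nra.
have rk : r' <= k * q'.
  by rewrite -ler_sqr ?nnegrE // mulr_ge0.
have h2 : q' * q' <= q' * (k * p') by nra.
by rewrite ler_pM2l in h2.
Qed.
Lemma dt_sum n (u v : 'rV[C]_n) : dt u v = \sum_j u 0 j * Num.conj (v 0 j).
Proof. by rewrite dtE mxE; apply: eq_bigr => j _; rewrite /ctrmx !mxE. Qed.

Lemma dtDl n (a b c : 'rV[C]_n) : dt (a + b) c = dt a c + dt b c.
Proof. by rewrite !dtE mulmxDl mxE. Qed.

Lemma dtZl n (x : C) (a c : 'rV[C]_n) : dt (x *: a) c = x * dt a c.
Proof. by rewrite !dtE -scalemxAl mxE. Qed.

Lemma dt_suml n (I : finType) (P : pred I) (F : I -> 'rV[C]_n) c :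
  dt (\sum_(i | P i) F i) c = \sum_(i | P i) dt (F i) c.
Proof. by rewrite dtE mulmx_suml summxE; apply: eq_bigr => i _; rewrite dtE. Qed.

Lemma dt_conj n (u v : 'rV[C]_n) : dt v u = Num.conj (dt u v).
Proof.
rewrite !dt_sum rmorph_sum; apply: eq_bigr => j _.
by rewrite rmorphM /= conjCK mulrC.
Qed.

Lemma frob_bound M d (y : 'rV[C]_M) (V : 'M[C]_(M, d)) :
  dt (y *m V) (y *m V) <= \tr (V *m ctrmx V) * dt y y.
Proof.
have e1 j : (y *m V) 0 j = dt y (row j (ctrmx V)).
  by rewrite dt_sum !mxE; apply: eq_bigr => i _; rewrite /ctrmx !mxE conjCK.
have e2 : \tr (V *m ctrmx V) = \sum_j dt (row j (ctrmx V)) (row j (ctrmx V)).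
  rewrite /mxtrace; under eq_bigr do rewrite mxE.
  rewrite exchange_big /=; apply: eq_bigr => j _; rewrite dt_sum.
  by apply: eq_bigr => i _; rewrite /ctrmx !mxE conjCK mulrC.
rewrite e2 mulr_suml [dt (y *m V) _]dt_sum; apply: ler_sum => j _.
rewrite e1 -normCK mulrC; exact: CS.
Qed.

Lemma tr_ge0 M d (V : 'M[C]_(M, d)) : 0 <= \tr (V *m ctrmx V).
Proof.
rewrite /mxtrace; apply: sumr_ge0 => i _; rewrite mxE; apply: sumr_ge0 => j _.
by rewrite /ctrmx !mxE mul_conjC_ge0.
Qed.

Lemma kappa_ge K N M (H : 'I_K -> 'M[C]_(N, M)) k :
  sigma_max (ctrmx (H k) *m H k) <= kappa H.
Proof. exact: (le_bigmax_ord (fun k => sigma_max (ctrmx (H k) *m H k))). Qed.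

Lemma pow_k K M d (V : 'I_K -> 'M[C]_(M, d)) (Pmax : R) k :
  \sum_(k < K) \tr (V k *m ctrmx (V k)) <= Pmax%:C ->
  \tr (V k *m ctrmx (V k)) <= Pmax%:C.
Proof.
move=> h; apply: le_trans h; rewrite (bigD1 k) //= lerDl.
by apply: sumr_ge0 => j _; apply: tr_ge0.
Qed.

End S.

Section M.
Variable R : realType.
Local Notation C := (R[i]).

Lemma main_bound K M N d (H : 'I_K -> 'M[C]_(N, M)) (sigma2 : 'I_K -> R) (Pmax : R)
  (Hsigma : forall k, 0 < sigma2 k) (HP : 0 < Pmax) (Hkappa : 0 < kappa H)
  (U : 'I_K -> 'M[C]_(N, d)) (V : 'I_K -> 'M[C]_(M, d))
  (Hpow : \sum_(k < K) \tr (V k *m ctrmx (V k)) <= Pmax%:C) k x (v : 'rV[C]_d) :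
  v != 0 -> v *m Emat H sigma2 U V k = x%:C *: v ->
  sigma2 k / (Pmax * kappa H + sigma2 k) <= x.
Proof.
move=> vn0 hv.
pose w := v *m ctrmx (U k).
pose z := w *m H k *m V k.
pose X := \sum_(j < K | j != k) H k *m V j *m ctrmx (V j) *m ctrmx (H k)
       + (sigma2 k)%:C%:M.
have eA : dt (v *m Emat H sigma2 U V k) v = x%:C * dt v v by rewrite hv dtZl.
have eT : v *m (1%:M - ctrmx (U k) *m H k *m V k) = v - z.
  by rewrite mulmxBr mulmx1 /z /w !mulmxA.
have eE : dt (v *m Emat H sigma2 U V k) v = dt (v - z) (v - z) + dt (w *m X) w.
  rewrite /Emat /= mulmxDr [in LHS]dtDl; congr (_ + _).
    by rewrite mulmxA dt_mulmx ctrmxK eT.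
  by rewrite !mulmxA dt_mulmx -/X /w.
have eX : (sigma2 k)%:C * dt w w <= dt (w *m X) w.
  rewrite /X mulmxDr dtDl mul_mx_scalar dtZl lerDr.
  rewrite mulmx_sumr dt_suml; apply: sumr_ge0 => j _.
  rewrite !mulmxA dt_mulmx ctrmxK dt_mulmx ctrmxK; exact: dt_ge0.
have hz : dt z z <= (Pmax * kappa H)%:C * dt w w.
  apply: le_trans (frob_bound (w *m H k) (V k)) _.
  rewrite rmorphM -mulrA; apply: ler_pM (tr_ge0 _) (dt_ge0 _) (pow_k k Hpow) _.
  apply: le_trans (kap_bound (H k) w) _; rewrite /=; apply: ler_wpM2r; first exact: dt_ge0.
  by rewrite lecR; exact: kappa_ge.
have Apos : 0 < dt v v by apply: dt_gt0.
have sk := Hsigma k.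
have pk : 0 < Pmax * kappa H by apply: mulr_gt0.
pose t := Pmax * kappa H / (Pmax * kappa H + sigma2 k).
have tpos : 0 < t by apply: divr_gt0 => //; apply: addr_gt0.
have h1 : sigma2 k / (Pmax * kappa H + sigma2 k) = 1 - t.
  by rewrite /t; field; rewrite gt_eqF //; exact: addr_gt0.
have h2 : t * sigma2 k = (1 - t) * (Pmax * kappa H).
  by rewrite /t; field; rewrite gt_eqF //; exact: addr_gt0.
clearbody t.
have cA : forall a : 'rV[C]_d, Num.conj (dt a a) = dt a a.
  by move=> a; rewrite -dt_conj.
have ct : Num.conj (t%:C) = t%:C := conjc_real t.
have eB : dt (v - z) (v - z) = dt v v + dt z z - (dt v z + Num.conj (dt v z)).
  exact: (dnormB (@dotmx C d) v z).
have eQ : dt (t%:C *: v - z) (t%:C *: v - z) =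
    t%:C ^+ 2 * dt v v + dt z z - t%:C * (dt v z + Num.conj (dt v z)).
  have e : dt (t%:C *: v - z) (t%:C *: v - z) = dt (t%:C *: v) (t%:C *: v) + dt z z
     - (dt (t%:C *: v) z + Num.conj (dt (t%:C *: v) z)) := dnormB (@dotmx C d) (t%:C *: v) z.
  have cA1 : conjc (dt v v) = dt v v := cA v.
  rewrite e dtZl [dt v (_ *: _)]dt_conj dtZl rmorphM /= ct cA.
  rewrite dtZl rmorphM /= ct. ring.
have key : t%:C * (dt v v + dt z z - (dt v z + Num.conj (dt v z)) +
      (sigma2 k)%:C * dt w w - (1 - t%:C) * dt v v) =
    dt (t%:C *: v - z) (t%:C *: v - z) +
      (1 - t%:C) * ((Pmax * kappa H)%:C * dt w w - dt z z).
  rewrite eQ; apply/eqP; rewrite -subr_eq0; apply/eqP.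
  transitivity ((t%:C * (sigma2 k)%:C - (1 - t%:C) * (Pmax * kappa H)%:C) * dt w w).
    ring.
  by rewrite -rmorphM h2 rmorphM rmorphB rmorph1 subrr mul0r.
rewrite -lecR -(ler_pM2r Apos) -eA eE h1 rmorphB rmorph1.
rewrite /=; apply: le_trans _ (lerD (lexx (dt (v - z) (v - z))) eX).
rewrite eB -subr_ge0.
have tC : 0 < t%:C by rewrite ltcR.
rewrite -(pmulr_rge0 _ tC) key; apply: addr_ge0; first exact: dt_ge0.
apply: mulr_ge0.
  have t1 : 0 <= 1 - t by rewrite -h1; apply: divr_ge0; [exact: ltW | apply: ltW; exact: addr_gt0].
  have -> : 1 - t%:C = (1 - t)%:C by rewrite rmorphB rmorph1.
  by rewrite ler0c.
by rewrite subr_ge0.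
Qed.

Lemma Emat_herm K M N d (H : 'I_K -> 'M[C]_(N, M)) (sigma2 : 'I_K -> R)
  (U : 'I_K -> 'M[C]_(N, d)) (V : 'I_K -> 'M[C]_(M, d)) k :
  ctrmx (Emat H sigma2 U V k) = Emat H sigma2 U V k.
Proof.
rewrite /Emat /=.
set X := (\sum_(j < K | j != k) _ + _)%R.
have hX : ctrmx X = X.
  rewrite /X ctrmxD ctrmx_scalar ctrmx_sum; congr (_ + _); apply: eq_bigr => j _.
  by rewrite !ctrmx_mul !ctrmxK !mulmxA.
rewrite ctrmxD; congr (_ + _); first by rewrite ctrmx_mul ctrmxK.
by rewrite !ctrmx_mul ctrmxK hX mulmxA.
Qed.

Lemma herm_eig n (A : 'M[C]_n) : (0 < n)%N -> ctrmx A = A -> exists x, real_eigs A x.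
Proof.
move=> n0 hA; have [a /eigenvalueP [v hv vn0]] := eigenvalue_closed A n0.
have Apos := dt_gt0 vn0.
have e1 : dt (v *m A) v = a * dt v v by rewrite hv dtZl.
have e2 : dt (v *m A) v = Num.conj (dt (v *m A) v).
  by rewrite -dt_conj dt_mulmx hA.
have ar : a \is Num.real.
  rewrite CrealE; apply/eqP; apply: (mulIf (lt0r_neq0 Apos)).
  by rewrite -e1 {1}e2 e1 rmorphM /= -dt_conj.
exists (complex.Re a); rewrite /real_eigs /= RRe_real //.
by apply/eigenvalueP; exists v.
Qed.
End M.

Theorem lemma1 (R : realType) (K M N d : nat) (Hd : (0 < d)%N)
  (H : 'I_K -> 'M[R[i]]_(N, M)) (sigma2 : 'I_K -> R) (Pmax : R)
  (Hsigma : forall k, 0 < sigma2 k) (HP : 0 < Pmax) (Hkappa : 0 < kappa H)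
  (U : 'I_K -> 'M[R[i]]_(N, d)) (V : 'I_K -> 'M[R[i]]_(M, d))
  (Hpow : \sum_(k < K) \tr (V k *m ctrmx (V k)) <= Pmax%:C) :
  forall k : 'I_K,
    sigma2 k / (Pmax * kappa H + sigma2 k) <= lambda_min (Emat H sigma2 U V k).
Proof.
move=> k; rewrite /lambda_min; apply: lb_le_inf.
  exact: herm_eig Hd (Emat_herm H sigma2 U V k).
move=> x; rewrite /real_eigs /= => /eigenvalueP [v hv vn0].
exact: (main_bound Hsigma HP Hkappa Hpow vn0 hv).
Qed.
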